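(* Let $(R,B)$ be an EIC problem with problem graph $G$, and let $\mathcal{A}_{(R,B)}$ be the image of its column repetition function. Then the minimum length $(C)_{(R,B)}$ of a centralized linear broadcast solution to $(R,B)$ equals $\mathrm{rminrk}_2(G,\mathcal{A}_{(R,B)})$, the minimum of $\mathrm{rk}_2(A')$ over all $A'\in\mathcal{A}_{(R,B)}$ that fit $G$.
   Context: Let $n,m$ be positive integers. An EIC problem is a pair $(R,B)$ of matrices in $\mathbb{F}_2^{n\times m}$ with disjoint supports; node $u$ needs block $a$ if $R_{ua}=1$ and has block $a$ if $B_{ua}=1$. Requirement pairs: $P=\{(u,a): R_{ua}=1\}$. The problem graph $G=(V,E)$ is the directed graph with vertices $V=\{v_{(u,a)}:(u,a)\in P\}$ and an edge from $v_{(u,a)}$ to $v_{(w,b)}$ iff $B_{ub}=1$ or $a=b$. $B_u$ is the $u$-th row of $B$, $\mathrm{diag}(B_u)$ the diagonal matrix with $B_u$ on the diagonal, $\boldsymbol e_a$ the $a$-th standard basis row vector of $\mathbb{F}_2^m$. A matrix $A'\in\mathbb{F}_2^{|V|\times|V|}$ (indexed by $V$) fits $G$ if its diagonal entries are all $1$ and $A'_{xy}=0$ whenever $x\ne y$ and $(x,y)\notin E$. The column repetition function $\phi_{(R,B)}:\mathbb{F}_2^{|V|\times m}\to\mathbb{F}_2^{|V|\times|V|}$ sends $A$ to the matrix whose column indexed by $v_{(u,a)}$ is the $a$-th column of $A$; $\mathcal{A}_{(R,B)}$ is its image. A centralized linear broadcast solution is $\beta\in\mathbb{F}_2^{h\times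 m}$ such that for every $(u,a)\in P$ there is $\boldsymbol\alpha\in\mathbb{F}_2^{h+m}$ with $\boldsymbol e_a=\boldsymbol\alpha\cdot\left[\begin{smallmatrix}\beta\\ \mathrm{diag}(B_u)\end{smallmatrix}\right]$; its length is $h$, and $(C)_{(R,B)}$ denotes the minimum length. *)

(* Defs.v *)
From HB Require Import structures.
From mathcomp Require Import all_boot all_order all_algebra.
Set Implicit Arguments. Unset Strict Implicit. Unset Printing Implicit Defensive.
Import GRing.Theory.
Local Open Scope ring_scope.

Definition F2 := 'F_2.

Definition disjoint_supports (n m : nat) (R B : 'M[F2]_(n, m)) : Prop :=
  forall (u : 'I_n) (a : 'I_m), ~ (R u a = 1 /\ B u a = 1).

Notation reqT R := {p : 'I__ * 'I__ | R p.1 p.2 == 1}.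

(* Vertices of the problem graph, indexed by 'I_#|V| via enum_val. *)
Definition nV (n m : nat) (R : 'M[F2]_(n, m)) : nat := #|{: reqT R}|.

Definition vtx (n m : nat) (R : 'M[F2]_(n, m)) (i : 'I_(nV R)) : 'I_n * 'I_m :=
  val (enum_val (i : 'I_#|{: reqT R}|)).

Definition pg_edge (n m : nat) (R B : 'M[F2]_(n, m)) (x y : 'I_(nV R)) : Prop :=
  B (vtx x).1 (vtx y).2 = 1 \/ (vtx x).2 = (vtx y).2.
Arguments pg_edge {n m} R B x y.

Definition fits (n m : nat) (R B : 'M[F2]_(n, m)) (A' : 'M[F2]_(nV R)) : Prop :=
  (forall x, A' x x = 1) /\
  (forall x y, x <> y -> ~ pg_edge R B x y -> A' x y = 0).
Arguments fits {n m} R B A'.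

Definition col_rep (n m : nat) (R : 'M[F2]_(n, m)) (A : 'M[F2]_(nV R, m))
  : 'M[F2]_(nV R) :=
  \matrix_(x, y) A x (vtx y).2.

Definition e_vec (m : nat) (a : 'I_m) : 'rV[F2]_m := delta_mx 0 a.

Definition lin_broadcast_sol (n m h : nat) (R B : 'M[F2]_(n, m))
  (beta : 'M[F2]_(h, m)) : Prop :=
  forall (u : 'I_n) (a : 'I_m), R u a = 1 ->
    exists alpha : 'rV[F2]_(h + m),
      e_vec a = alpha *m col_mx beta (diag_mx (row u B)).
Arguments lin_broadcast_sol {n m h} R B beta.

(* Main.v *)
Require Import Defs.
From mathcomp Require Import all_boot all_order all_algebra.
Import GRing.Theory.
Local Open Scope ring_scope.
Lemma F2_01 (x : F2) : x = 0 \/ x = 1.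
Proof. case: x => [[|[|k]] Hk]; [left|right|]; try by apply/val_inj. by []. Qed.

Lemma F2_neq1 (x : F2) : x <> 1 -> x = 0.
Proof. by case: (F2_01 x). Qed.

Lemma vtxR n m (R : 'M[F2]_(n, m)) (x : 'I_(nV R)) : R (vtx x).1 (vtx x).2 = 1.
Proof. rewrite /vtx; exact: (eqP (valP (enum_val (x : 'I_#|{: reqT R}|)))). Qed.

Arguments vtxR {n m R} x.
Lemma disjR0 n m (R B : 'M[F2]_(n, m)) u a :
  disjoint_supports R B -> R u a = 1 -> B u a = 0.
Proof. by move=> H Ru; apply: F2_neq1 => Bu; apply: (H u a). Qed.

Arguments disjR0 {n m R B u a}.
Arguments F2_neq1 {x}.
Lemma L1 n m h (R B : 'M[F2]_(n, m)) (beta : 'M[F2]_(h, m)) :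
  disjoint_supports R B -> lin_broadcast_sol R B beta ->
  exists A : 'M[F2]_(nV R, m), fits R B (col_rep A) /\ (\rank (col_rep A) <= h)%N.
Proof.
move=> dRB sol.
pose M (x : 'I_(nV R)) := col_mx beta (diag_mx (row (vtx x).1 B)).
pose al (x : 'I_(nV R)) := odflt 0 [pick alpha | e_vec (vtx x).2 == alpha *m M x].
have alP x : e_vec (vtx x).2 = al x *m M x.
  rewrite /al; case: pickP => [al0 /eqP //|H].
  have [alpha Ha] := sol _ _ (vtxR x).
  by move: (H alpha); rewrite -Ha eqxx.
pose X : 'M[F2]_(nV R, h) := \matrix_(x, j) (lsubmx (al x)) 0 j.
pose P : 'M[F2]_(m, nV R) := \matrix_(b, y) ((b == (vtx y).2)%:R : F2).
have cr : col_rep (X *m beta) = X *m (beta *m P).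
  apply/matrixP => x y; rewrite mulmxA [RHS]mxE (bigD1 (vtx y).2) //= big1 ?addr0.
    by rewrite [P _ _]mxE eqxx mulr1 /col_rep mxE.
  by move=> b nb; rewrite [P _ _]mxE (negbTE nb) mulr0.
exists (X *m beta); split; last first.
  rewrite cr; apply: leq_trans (mxrankM_maxr _ _) _.
  apply: leq_trans (mxrankM_maxl _ _) _; exact: rank_leq_row.
have key x b : (X *m beta) x b = e_vec (vtx x).2 0 b - (rsubmx (al x)) 0 b * B (vtx x).1 b.
  rewrite alP /M -{1}(hsubmxK (al x)) mul_row_col mul_mx_diag !mxE.
  by rewrite addrK; apply: eq_bigr => j _; rewrite mxE.
split=> [x|x y nxy ne]; rewrite /col_rep mxE key.
  by rewrite (disjR0 dRB (vtxR x)) mulr0 subr0 /e_vec mxE !eqxx.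
have [Bn Ae] : B (vtx x).1 (vtx y).2 <> 1 /\ (vtx x).2 <> (vtx y).2.
  by split=> H; apply: ne; [left|right].
rewrite (F2_neq1 Bn) mulr0 subr0 /e_vec mxE eqxx /=.
by case: eqP => // H; case: Ae.
Qed.

Lemma L2 n m (R B : 'M[F2]_(n, m)) (A : 'M[F2]_(nV R, m)) :
  fits R B (col_rep A) ->
  exists beta : 'M[F2]_(\rank (col_rep A), m), lin_broadcast_sol R B beta.
Proof.
move=> [fd fo].
set C := col_rep A.
pose pk (b : 'I_m) := [pick y' : 'I_(nV R) | (vtx y').2 == b].
pose Q : 'M[F2]_(nV R, m) :=
  \matrix_(y, b) (if pk b is Some y' then (y == y')%:R else 0).
have ASE x b : (C *m Q) x b = if pk b is Some y' then C x y' else 0.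
  rewrite mxE; case E: (pk b) => [y'|].
    rewrite (bigD1 y') //= big1 ?addr0; first by rewrite [Q _ _]mxE E eqxx mulr1.
    by move=> y ny; rewrite [Q _ _]mxE E (negbTE ny) mulr0.
  by rewrite big1 // => y _; rewrite [Q _ _]mxE E mulr0.
have : (C <= row_base C)%MS by rewrite eq_row_base submx_refl.
case/submxP => D CD.
exists (row_base C *m Q) => u a Ru.
have Ru' : R (u, a).1 (u, a).2 == 1 by apply/eqP.
pose x : 'I_(nV R) := enum_rank (exist _ (u, a) Ru' : reqT R).
have vx : vtx x = (u, a) by rewrite /vtx /x enum_rankK.
have rowAS : row x D *m (row_base C *m Q) = row x (C *m Q).
  by rewrite -row_mul mulmxA -CD.
exists (row_mx (row x D) (e_vec a - row x (C *m Q))).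
rewrite mul_row_col rowAS.
have -> : (e_vec a - row x (C *m Q)) *m diag_mx (row u B) = e_vec a - row x (C *m Q).
  apply/matrixP => i b; rewrite mul_mx_diag mxE [row u B _ _]mxE.
  case: (F2_01 (B u b)) => Bub; rewrite Bub; last by rewrite mulr1.
  have := ASE x b; move: (C *m Q) => CQ ASEx.
  rewrite mulr0 /e_vec !mxE ASEx (ord1 i) /=.
  case: (eqVneq b a) => [->|nba].
    case E: (pk a) => [y'|]; last first.
      by move: E; rewrite /pk; case: pickP => // /(_ x); rewrite vx eqxx.
    move: E; rewrite /pk; case: pickP => // y0 /eqP ya [<-].
    have -> : C x y0 = C x x by rewrite /C !mxE ya vx.
    by rewrite /C fd subrr.
  rewrite sub0r; apply/esym; apply/eqP; rewrite oppr_eq0; apply/eqP.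
  case E: (pk b) => [y'|] //.
  move: E; rewrite /pk; case: pickP => // y0 /eqP yb [<-].
  apply: fo.
    by move=> xy; move: yb; rewrite -xy vx /= => ba; move: nba; rewrite ba eqxx.
  rewrite /pg_edge vx yb /=.
  by rewrite Bub => -[/esym/eqP|ab]; [rewrite oner_eq0|move: nba; rewrite ab eqxx].
by rewrite addrC subrK.
Qed.

Arguments L1 {n m h R B beta}.
Arguments L2 {n m R B A}.
From Stdlib Require Import Classical.

Lemma min_ex (P : nat -> Prop) : (exists n, P n) -> exists n, P n /\ forall k, P k -> (n <= k)%N.
Proof.
case=> n; elim: n {-2}n (leqnn n) => [|N IH] n le Pn.
  by exists n; split=> // k _; move: le; rewrite leqn0 => /eqP ->.
case: (classic (exists k, (k < n)%N /\ P k)) => [[k [kn Pk]]|H].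
  apply: (IH k) => //; by rewrite -ltnS (leq_trans kn le).
exists n; split=> // k Pk; case: (leqP n k) => // kn; case: H; by exists k.
Qed.

Theorem theorem2 (n m : nat) (R B : 'M[F2]_(n, m)) :
  disjoint_supports R B ->
  exists r : nat,
    ((exists beta : 'M[F2]_(r, m), lin_broadcast_sol R B beta) /\
     (forall (h : nat) (beta : 'M[F2]_(h, m)),
        lin_broadcast_sol R B beta -> (r <= h)%N)) /\
    ((exists A : 'M[F2]_(nV R, m), fits R B (col_rep A) /\ \rank (col_rep A) = r) /\
     (forall A : 'M[F2]_(nV R, m), fits R B (col_rep A) -> (r <= \rank (col_rep A))%N)).
Proof.
move=> dRB.
have sol1 : lin_broadcast_sol R B (1%:M : 'M[F2]_m).
  by move=> u a _; exists (row_mx (e_vec a) 0); rewrite mul_row_col mul0mx addr0 mulmx1.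
have [r [[A [fA rA]] rmin]] : exists r, (exists A : 'M[F2]_(nV R, m), fits R B (col_rep A) /\ \rank (col_rep A) = r)
   /\ forall k, (exists A : 'M[F2]_(nV R, m), fits R B (col_rep A) /\ \rank (col_rep A) = k) -> (r <= k)%N.
  apply: min_ex; have [A [fA _]] := L1 dRB sol1; by exists (\rank (col_rep A)), A.
exists r; split; [split|split].
- by have [beta sb] := L2 fA; rewrite -rA; exists beta.
- move=> h beta sb; have [A' [fA' le]] := L1 dRB sb.
  apply: leq_trans le; apply: rmin; by exists A'.
- by exists A.
- by move=> A' fA'; apply: rmin; exists A'.
Qed.
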